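(* Let $E$ be a Hermite–Biehler entire function with no real zeros whose phase function satisfies $\varphi'\in L^\infty(\mathbb{R})$, and let $0<p<\infty$. Suppose there exists $C>0$ such that $\lVert f/E\rVert_\infty\le C\lVert f/E\rVert_p$ for all real entire functions $f\in\mathcal{H}^p(E)$. Then $C(p,E)\le C$.
   Context: An entire function $E$ is Hermite–Biehler if $\lvert E(\overline{z})\rvert < \lvert E(z)\rvert$ for $z$ in the upper half-plane $\mathbb{C}_+$. For an entire $g$, $g^{\#}(z)=\overline{g(\overline z)}$; $g$ is real entire if real on $\mathbb{R}$. The phase function $\varphi$ is a smooth real function on $\mathbb{R}$ with $E^{\#}(x)/E(x)=e^{i\varphi(x)}$. For $0<p<\infty$, $\mathcal{H}^p(E)$ is the space of entire $f$ with $f/E, f^{\#}/E$ in the Hardy space $H^p(\mathbb{C}_+)$, $\lVert f/E\rVert_p=(\int_{\mathbb{R}}\lvert f/E\rvert^p dx)^{1/p}$; $\mathcal{H}^\infty(E)$ is defined with bounded analytic functions and $\lVert f/E\rVert_\infty=\sup_{\mathbb{R}}\lvert f/E\rvert$. When $\varphi'\in L^\infty$, $\mathcal{H}^p(E)\subset\mathcal{H}^\infty(E)$ and $C(p,E)$ is the norm of this embedding. *)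

(* Defs.v *)
From mathcomp Require Import all_boot all_order all_algebra.
From mathcomp Require Import all_classical all_reals all_analysis.
From mathcomp Require Import complex.
Import Order.TTheory GRing.Theory Num.Theory.
Import numFieldNormedType.Exports.

Set Implicit Arguments.
Unset Strict Implicit.
Unset Printing Implicit Defensive.

Local Open Scope ring_scope.
Local Open Scope complex_scope.

Definition cabs (R : realType) (z : R[i]) : R := complex.Re `|z|.

Definition UHP (R : realType) : set R[i] := [set z | 0 < complex.Im z].

(* complex (C-)differentiability at a point *)
Definition cderivable (R : realType) (F : R[i] -> R[i]) (z : R[i]) : Prop :=
  derivable (F : R[i]^o -> R[i]^o) z 1.

Definition holomorphic_on (R : realType) (D : set R[i]) (F : R[i] -> R[i]) :=
  forall z, D z -> cderivable F z.

Definition entire (R : realType) (F : R[i] -> R[i]) := forall z, cderivable F z.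

Definition sharp (R : realType) (g : R[i] -> R[i]) : R[i] -> R[i] :=
  fun z => (g z^*)^*.

Definition real_entire (R : realType) (f : R[i] -> R[i]) :=
  entire f /\ forall x : R, complex.Im (f x%:C) = 0.

Definition Hermite_Biehler (R : realType) (E : R[i] -> R[i]) :=
  entire E /\ forall z : R[i], 0 < complex.Im z -> cabs (E z^*) < cabs (E z).

Definition phase_function (R : realType) (E : R[i] -> R[i]) (phi : R -> R) :=
  (forall (n : nat) (x : R), derivable (derive1n n phi) x 1) /\
  forall x : R, sharp E x%:C / E x%:C = (cos (phi x)) +i* (sin (phi x)).

Definition Hardy (R : realType) (p : R) (F : R[i] -> R[i]) :=
  holomorphic_on (@UHP R) F /\
  exists M : R, forall y : R, 0 < y ->
    (\int[lebesgue_measure]_(x in setT) ((cabs (F (x +i* y))) `^ p)%:E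
       <= M%:E)%E.

Definition Hardy_inf (R : realType) (F : R[i] -> R[i]) :=
  holomorphic_on (@UHP R) F /\
  exists M : R, forall z, UHP z -> cabs (F z) <= M.

Definition HpE (R : realType) (p : R) (E : R[i] -> R[i]) (f : R[i] -> R[i]) :=
  entire f /\ Hardy p (fun z => f z / E z) /\ Hardy p (fun z => sharp f z / E z).

Definition normp (R : realType) (p : R) (E f : R[i] -> R[i]) : \bar R :=
  Lnorm (@lebesgue_measure R) p%:E (fun x : R => (cabs (f x%:C / E x%:C))%:E).

Definition normsup (R : realType) (E f : R[i] -> R[i]) : \bar R :=
  ereal_sup [set (cabs (f x%:C / E x%:C))%:E | x in [set: R]].

Definition embedding_norm (R : realType) (p : R) (E : R[i] -> R[i]) : \bar R :=
  ereal_sup [set normsup E f | f in [set f | HpE p E f /\ (normp p E f <= 1)%E]].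

(* Main.v *)
Require Import Defs.
From mathcomp Require Import all_boot all_order all_algebra.
From mathcomp Require Import all_classical all_reals all_analysis.
From mathcomp Require Import complex.
From mathcomp Require Import measurable_realfun.
From mathcomp Require Import ring lra.
Import Order.TTheory GRing.Theory Num.Theory.
Import numFieldNormedType.Exports.
Local Open Scope ring_scope.
Local Open Scope complex_scope.

Section S.
Local Open Scope classical_set_scope.
Variable R : realType.
Implicit Types (F G : R[i] -> R[i]) (z a b A B : R[i]).
Lemma conjc_cont (l : R[i]) : {for l, continuous (conjc : R[i]^o -> R[i]^o)}.
Proof.
apply/(@cvgrPdist_lt _ _ _ (nbhs (l : R[i]^o))) => eps eps0.
have := (@cvgrPdist_lt _ _ _ (nbhs (l : R[i]^o)) _ (@id R[i]^o) l).1 cvg_id eps eps0.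
move=> /(_ _) H.
apply: (filterS _ H) => t /=.
by rewrite -rmorphB normcJ.
Qed.

Lemma conjc_dnbhs : ((conjc : R[i]^o -> R[i]^o) @ (0 : R[i]^o)^') --> (0 : R[i]^o)^'.
Proof.
move=> A HA.
have HA' : nbhs (0:R[i]^o) (fun y => y != 0 -> A y) by exact: HA.
suff : nbhs (0:R[i]^o) (fun h => h != 0 -> A h^*) by [].
have H0 : (conjc : R[i]^o -> R[i]^o) @ (0:R[i]^o) --> (0:R[i]^o).
  have e0 : conjc (0:R[i]^o) = (0:R[i]^o) by exact: conjc0.
  by rewrite -[X in _ --> X]e0; exact: conjc_cont.
have H : nbhs (0:R[i]^o) (fun h => h^* != 0 -> A h^*) := H0 _ HA'.
apply: (filterS _ H) => h /= Hh hn0; apply: Hh.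
by rewrite conjc_eq0.
Qed.

Lemma sharp_cder F z : cderivable F z^* -> cderivable (sharp F) z.
Proof.
rewrite /cderivable /derivable => /cvg_ex [l Hl].
apply/cvg_ex; exists l^*.
have H1 := cvg_comp _ _ conjc_dnbhs Hl.
have H2 := cvg_comp _ _ H1 (conjc_cont l).
apply: cvg_trans H2.
apply: near_eq_cvg; near=> h.
rewrite /sharp /= /shift /=.
rewrite /GRing.scale /= !mulr1.
rewrite rmorphM rmorphB fmorphV /=.
by rewrite (conjcK h) (rmorphD conjc h z).
Unshelve. all: by end_near. Qed.
Lemma cabsE z : `|z| = (cabs z)%:C.
Proof. by rewrite /cabs normc_def. Qed.

Lemma cabs_ge0 z : 0 <= cabs z.
Proof. by rewrite /cabs normc_def /= sqrtr_ge0. Qed.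

Lemma cabsM a b : cabs (a * b) = cabs a * cabs b.
Proof. by apply: complexI; rewrite rmorphM /= -!cabsE normrM. Qed.

Lemma cabsV a : cabs (a^-1) = (cabs a)^-1.
Proof. by apply: complexI; rewrite fmorphV /= -!cabsE normfV. Qed.

Lemma cabsD a b : cabs (a + b) <= cabs a + cabs b.
Proof. by rewrite -lecR rmorphD /= -!cabsE ler_normD. Qed.

Lemma cabsR (x : R) : cabs x%:C = `|x|.
Proof. by rewrite /cabs normc_def /= expr0n /= addr0 sqrtr_sqr. Qed.

Lemma cabsB a b : `|cabs a - cabs b| <= cabs (a - b).
Proof.
have := ler_dist_dist a b.
rewrite [`|a|]cabsE [`|b|]cabsE -rmorphB [`|(_ - _)%:C|]cabsE cabsR cabsE lecR //.
Qed.

Lemma cabsJ a : cabs (a^*) = cabs a.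
Proof. by apply: complexI; rewrite -!cabsE normcJ. Qed.


Lemma cder_lin F G a b z : cderivable F z -> cderivable G z ->
  cderivable (fun w => a * F w + b * G w) z.
Proof.
move=> HF HG.
exact: (derivableD (derivableZ (k:=a) HF) (derivableZ (k:=b) HG)).
Qed.

Lemma line_cont (y x : R) :
  (fun t : R => (t +i* y : R[i]^o)) @ x --> (x +i* y : R[i]^o).
Proof.
apply/cvgrPdist_lt => eps eps0.
have [eI eR] : complex.Im eps = 0 /\ 0 < complex.Re eps.
  by move: eps0; rewrite ltcE /= => /andP[/eqP -> ->].
have H := (@cvgrPdist_lt _ _ R (nbhs x) (nbhs_filter x) id x).1 cvg_id (complex.Re eps) eR.
apply: (filterS _ H) => t /= Ht.
have -> : (x +i* y : R[i]^o) - (t +i* y) = (x - t)%:C.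
  by apply/eqP; rewrite eq_complex /= subrr !eqxx.
have -> : eps = (complex.Re eps)%:C by clear H Ht eR eps0; case: eps eI => a b /= ->.
by rewrite cabsE ltcR cabsR.
Qed.

Lemma cont_line_cabs F (y : R) :
  (forall x : R, {for (x +i* y), continuous (F : R[i]^o -> R[i]^o)}) ->
  continuous (fun x : R => cabs (F (x +i* y))).
Proof.
move=> cF x.
apply/cvgrPdist_lt => e e0.
have e0' : (0 : R[i]^o) < e%:C by rewrite ltcR.
have HF := (@cvgrPdist_lt _ _ _ _ (nbhs_filter (x +i* y : R[i]^o)) _ _).1 (cF x) _ e0'.
have H : nbhs x (fun t : R => `|F (x +i* y) - F (t +i* y)| < e%:C) := line_cont y x _ HF.
apply: (filterS _ H) => t /= Ht.
apply: le_lt_trans (cabsB _ _) _.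
by rewrite -ltcR -cabsE.
Qed.

Lemma meas_line F (y p : R) :
  (forall x : R, {for (x +i* y), continuous (F : R[i]^o -> R[i]^o)}) ->
  measurable_fun [set: R] (fun x : R => (((cabs (F (x +i* y))) `^ p)%:E : \bar R)).
Proof.
move=> cF.
apply/measurable_EFinP.
apply: (measurableT_comp (measurable_powR p)).
apply: continuous_measurable_fun.
exact: cont_line_cabs.
Qed.

Lemma cder_cont F z : cderivable F z -> {for z, continuous (F : R[i]^o -> R[i]^o)}.
Proof.
move=> /derivable1_diffP d.
exact: differentiable_continuous.
Qed.

Lemma cont_div F G z : {for z, continuous (F : R[i]^o -> R[i]^o)} ->
  {for z, continuous (G : R[i]^o -> R[i]^o)} -> G z != 0 ->
  {for z, continuous ((fun w => F w / G w) : R[i]^o -> R[i]^o)}.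
Proof. move=> cF cG G0; exact: (cvgM cF (cvgV G0 cG)). Qed.

Lemma cabs_lin_le (c1 c2 : R[i]) A B : cabs c1 + cabs c2 <= 1 ->
  cabs (c1 * A + c2 * B) <= Num.max (cabs A) (cabs B).
Proof.
move=> h.
apply: (le_trans (cabsD _ _)); rewrite !cabsM.
have hA : cabs A <= Num.max (cabs A) (cabs B) by rewrite le_max lexx.
have hB : cabs B <= Num.max (cabs A) (cabs B) by rewrite le_max lexx orbT.
apply: (le_trans (y := (cabs c1 + cabs c2) * Num.max (cabs A) (cabs B))).
  rewrite mulrDl; apply: lerD; apply: ler_wpM2l => //; exact: cabs_ge0.
rewrite -[X in _ <= X]mul1r; apply: ler_wpM2r => //.
exact: le_trans (cabs_ge0 A) hA.
Qed.

Lemma pow_lin_le (p : R) (c1 c2 : R[i]) A B : 0 <= p -> cabs c1 + cabs c2 <= 1 ->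
  cabs (c1 * A + c2 * B) `^ p <= cabs A `^ p + cabs B `^ p.
Proof.
move=> p0 h.
have hm := @cabs_lin_le c1 c2 A B h.
apply: (le_trans (y := Num.max (cabs A) (cabs B) `^ p)).
  apply: ge0_ler_powR => //; rewrite nnegrE ?cabs_ge0 //.
  exact: le_trans (cabs_ge0 _) hm.
case: (leP (cabs A) (cabs B)) => _.
  by rewrite lerDr powR_ge0.
by rewrite lerDl powR_ge0.
Qed.
End S.

Theorem lemma5 (R : realType) (E : R[i] -> R[i]) (p C : R) :
  Hermite_Biehler E ->
  (forall x : R, E x%:C != 0) ->
  (exists phi : R -> R, phase_function E phi /\
     exists M : R, forall x : R, `|derive1 phi x| <= M) ->
  0 < p ->
  0 < C ->
  (forall f : R[i] -> R[i], real_entire f -> HpE p E f ->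
     (normsup E f <= C%:E * normp p E f)%E) ->
  (embedding_norm p E <= C%:E)%E.
Proof.
move=> [EE _] Ereal _ p0 C0 Hyp.
rewrite /embedding_norm; apply: ub_ereal_sup => _ [f [[fE [Hf1 Hf2]] Hn] <-].
rewrite /normsup; apply: ub_ereal_sup => _ [x0 _ <-].
set a := f x0%:C.
have [a0|an0] := eqVneq a 0.
  by rewrite a0 mul0r /cabs normr0 /= lee_fin ltW.
pose u := (conjc a) / `|a|.
have na0 : `|a| != 0 by rewrite normr_eq0.
have ca0 : cabs a != 0.
  by apply: contra na0; rewrite cabsE => /eqP ->.
have aa : (conjc a) * a = `|a| ^+ 2.
  rewrite -add_Re2_Im2; case: (a) => r s; apply/eqP; rewrite eq_complex /=.
  apply/andP; split; apply/eqP; ring.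
have ua : u * a = `|a|.
  by rewrite /u mulrAC aa expr2 mulfK.
have cu : cabs u = 1.
  by rewrite /u cabsM cabsV cabsJ [`|a|]cabsE cabsR ger0_norm ?cabs_ge0 // mulfV.
clearbody u.
pose g := fun z => (u/2) * f z + ((conjc u)/2) * sharp f z.
have h2 : (2^-1 : R[i]) = (2^-1 : R)%:C.
  by rewrite fmorphV rmorph_nat.
have cd : conjc (u/2) = (conjc u)/2.
  by rewrite rmorphM; congr (_ * _); rewrite h2; exact: conjc_real.
have dc : conjc ((conjc u)/2) = u/2.
  rewrite rmorphM; congr (_ * _); first exact: conjcK.
  by rewrite h2; exact: conjc_real.
have gs : sharp g = g.
  apply: funext => z; rewrite /g /sharp.
  have cjD (v w : R[i]) : conjc (v + w) = conjc v + conjc w := rmorphD conjc v w.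
  have cjM (v w : R[i]) : conjc (v * w) = conjc v * conjc w := rmorphM conjc v w.
  have c2c : conjc (2^-1 : R[i]) = 2^-1 by rewrite h2; exact: conjc_real.
  by rewrite cjD !cjM !conjcK c2c addrC.
have gE z : g z / E z = (u/2) * (f z / E z) + ((conjc u)/2) * (sharp f z / E z).
  by rewrite /g mulrDl !mulrA.
have c2n : cabs (2 : R[i]) = 2.
  have -> : (2 : R[i]) = (2 : R)%:C by rewrite -(rmorph_nat (real_complex R) 2).
  by rewrite cabsR ger0_norm.
have cu2 : cabs (u/2) + cabs ((conjc u)/2) <= 1.
  rewrite !cabsM !cabsV cabsJ cu c2n; lra.
have gent : entire g.
  by move=> z; apply: cder_lin; [exact: fE| apply: sharp_cder; exact: fE].
have gval x : g x%:C = (complex.Re (u * f x%:C))%:C.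
  rewrite ReJ_add /g /sharp conjc_real rmorphM /=.
  by rewrite mulrDl; congr (_ + _); exact: mulrAC.
have greal : real_entire g.
  by split => // x; rewrite gval.
have gEf : (fun z => g z / E z) =
    (fun w => (u/2) * (f w / E w) + ((conjc u)/2) * (sharp f w / E w)).
  by apply: funext => z; exact: gE.
have HgE : Hardy p (fun z => g z / E z).
  move: Hf1 Hf2 => [Hf1h [M1 HM1]] [Hf2h [M2 HM2]].
  have Hgh : holomorphic_on (@UHP R) (fun z => g z / E z).
    by move=> z Hz; rewrite gEf; apply: cder_lin; [exact: Hf1h|exact: Hf2h].
  split => //.
  exists (M1 + M2) => y y0.
  have Hl (F : R[i] -> R[i]) : holomorphic_on (@UHP R) F ->
      measurable_fun [set: R] (fun x : R => (((cabs (F (x +i* y))) `^ p)%:E : \bar R)).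
    move=> hF; apply: meas_line => x; apply: cder_cont; exact: hF.
  pose f2 := fun x : R =>
     (((cabs (f (x +i* y) / E (x +i* y))) `^ p)%:E +
     ((cabs (sharp f (x +i* y) / E (x +i* y))) `^ p)%:E)%E.
  have H1 : (\int[lebesgue_measure]_(x in setT)
      ((cabs (g (x +i* y) / E (x +i* y))) `^ p)%:E <=
      \int[lebesgue_measure]_(x in setT) f2 x)%E.
    apply: ge0_le_integral.
    - exact: measurableT.
    - by move=> x _; rewrite lee_fin powR_ge0.
    - exact: (Hl (fun z => g z / E z) Hgh).
    - by apply: emeasurable_funD; [exact: (Hl (fun z => f z / E z) Hf1h)|
        exact: (Hl (fun z => sharp f z / E z) Hf2h)].
    - move=> x _; rewrite /f2 -EFinD lee_fin gE; apply: pow_lin_le => //.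
      exact: ltW.
  apply: le_trans H1 _; rewrite /f2.
  rewrite ge0_integralD //.
  - by rewrite EFinD; exact: leeD (HM1 y y0) (HM2 y y0).
  - by move=> x _; rewrite lee_fin powR_ge0.
  - exact: (Hl (fun z => f z / E z) Hf1h).
  - by move=> x _; rewrite lee_fin powR_ge0.
  - exact: (Hl (fun z => sharp f z / E z) Hf2h).
have gH : HpE p E g.
  by split => //; rewrite gs; split.
have gn : (normp p E g <= normp p E f)%E.
  rewrite /normp unlock /=.
  have Hm (G : R[i] -> R[i]) :
      (forall x : R, {for (x +i* 0), continuous (G : R[i]^o -> R[i]^o)}) ->
      measurable_fun [set: R] (fun x : R => ((`|cabs (G x%:C)| `^ p)%:E : \bar R)).
    move=> cG.
    have -> : (fun x : R => ((`|cabs (G x%:C)| `^ p)%:E : \bar R)) =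
        (fun x => ((cabs (G (x +i* 0))) `^ p)%:E).
      by apply: funext => x; rewrite ger0_norm // cabs_ge0.
    exact: meas_line.
  apply: gt0_ler_poweR.
  - by rewrite invr_ge0 ltW.
  - by rewrite in_itv /= leey andbT integral_ge0 // => x _; rewrite lee_fin powR_ge0.
  - by rewrite in_itv /= leey andbT integral_ge0 // => x _; rewrite lee_fin powR_ge0.
  apply: ge0_le_integral.
  - exact: measurableT.
  - by move=> x _; rewrite lee_fin powR_ge0.
  - exact: (Hm (fun w => g w / E w) (fun x => @cont_div R _ _ _ (@cder_cont R _ _ (gent _))
      (@cder_cont R _ _ (EE _)) (Ereal x))).
  - exact: (Hm (fun w => f w / E w) (fun x => @cont_div R _ _ _ (@cder_cont R _ _ (fE _))
      (@cder_cont R _ _ (EE _)) (Ereal x))).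
  move=> x _; rewrite lee_fin !ger0_norm ?cabs_ge0 //.
  apply: ge0_ler_powR; [exact: ltW|rewrite nnegrE; exact: cabs_ge0|rewrite nnegrE; exact: cabs_ge0|].
  rewrite gE.
  have -> : cabs (f x%:C / E x%:C) = Num.max (cabs (f x%:C / E x%:C)) (cabs (sharp f x%:C / E x%:C)).
    by rewrite /sharp conjc_real !cabsM cabsJ maxxx.
  exact: cabs_lin_le.
have gx0 : cabs (g x0%:C / E x0%:C) = cabs (f x0%:C / E x0%:C).
  rewrite gval -/a ua !cabsM cabsR ger0_norm //.
  exact: cabs_ge0.
rewrite -gx0.
apply: (le_trans (y := normsup E g)).
  by apply: ereal_sup_ubound; exists x0.
apply: (le_trans (Hyp g greal gH)).
rewrite -[X in (_ <= X)%E]mule1.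
apply: lee_wpmul2l; first by rewrite lee_fin ltW.
exact: le_trans gn Hn.
Qed.
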